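(* Let $A$ be an $n\times n$ Dickson matrix over $\mathbb{F}_{q^n}$ such that $\mathrm{rank}\big(A+\mathrm{diag}(d,d^q,\dots,d^{q^{n-1}})\big)=1$ for some $d\in\mathbb{F}_{q^n}$, and let $B$ be a Dickson matrix such that $A$ and $B$ have equal corresponding principal minors of all orders. Then $A$ is diagonally similar to $B$.
   Context: A Dickson matrix is the $n\times n$ matrix indexed by $\mathbb{Z}_n$ with $A[i|j]=a_{j-i}^{q^i}$ associated to a $q$-polynomial $\sum_{j=0}^{n-1}a_jx^{q^j}\in\mathbb{F}_{q^n}[x]$. Equal corresponding principal minors: $\det A[\alpha|\alpha]=\det B[\alpha|\alpha]$ for all nonempty $\alpha\subseteq\mathbb{Z}_n$. Diagonally similar: $B=D^{-1}AD$ for an invertible diagonal matrix $D$. *)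

(* Defs.v *)
From HB Require Import structures.
From mathcomp Require Import all_boot all_order all_algebra all_field.
Set Implicit Arguments. Unset Strict Implicit. Unset Printing Implicit Defensive.
Import GRing.Theory.
Local Open Scope ring_scope.

(* Dickson matrix of the q-polynomial sum_{j<n} a_j x^{q^j} over L:
   rows/columns indexed by Z_n (here 'I_n), entry (i,j) = a_{(j-i) mod n}^{q^i}.
   Only a_0, ..., a_{n-1} are used. *)
Definition dickson_mx (L : fieldType) (q n : nat) (a : nat -> L) : 'M[L]_n :=
  \matrix_(i < n, j < n) (a (((j + n) - i) %% n)%N) ^+ (q ^ i).

Definition is_dickson (L : fieldType) (q n : nat) (A : 'M[L]_n) : Prop :=
  exists a : nat -> L, A = dickson_mx q n a.

Definition principal_submx (L : fieldType) (n : nat) (A : 'M[L]_n)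
  (alpha : {set 'I_n}) : 'M[L]_#|alpha| :=
  mxsub (fun i : 'I_#|alpha| => enum_val i) (fun j : 'I_#|alpha| => enum_val j) A.

Definition principal_minor (L : fieldType) (n : nat) (A : 'M[L]_n)
  (alpha : {set 'I_n}) : L := \det (principal_submx A alpha).

Definition equal_principal_minors (L : fieldType) (n : nat) (A B : 'M[L]_n) : Prop :=
  forall alpha : {set 'I_n}, alpha != set0 ->
    principal_minor A alpha = principal_minor B alpha.

Definition diag_similar (L : fieldType) (n : nat) (A B : 'M[L]_n) : Prop :=
  exists d : 'rV[L]_n, (forall i, d 0 i != 0) /\
    B = invmx (diag_mx d) *m A *m diag_mx d.

(* Main.v *)
Require Import Defs.
From HB Require Import structures.
From mathcomp Require Import all_boot all_order all_fingroup all_algebra all_solvable all_field.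
From mathcomp Require Import ring.
Import GRing.Theory.
Local Open Scope ring_scope.
Set Implicit Arguments. Unset Strict Implicit. Unset Printing Implicit Defensive.
From mathcomp Require Import zify.
Lemma frobD (L : finFieldType) (q n : nat) (hn : (0 < n)%N) (hL : #|L| = (q ^ n)%N)
  (x y : L) (i : nat) : (x + y) ^+ (q ^ i) = x ^+ (q ^ i) + y ^+ (q ^ i).
Proof.
have [p pr_p pc] := finPcharP L.
have hab := fin_ring_pchar_abelem pc.
have pg : pgroup p [set: L] := abelem_pgroup hab.
have pq : p.-nat q.
  move: pg; rewrite /pgroup cardsT hL pnatX => /orP[//|].
  by rewrite eqn0Ngt hn.
apply: exprDn_pchar.
rewrite (eq_pnat _ (pcharf_eq pc)) pnatX pq //.
Qed.
Ltac normord :=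
  repeat match goal with
  | |- context [@lift ?k ?x ?y] =>
     let v := eval vm_compute in (nat_of_ord (@lift k x y)) in
     rewrite (_ : @lift k x y = @Ordinal k v isT); [| by apply: ord_inj]
  | |- context [@ord0 ?k] => rewrite (_ : @ord0 k = @Ordinal k.+1 0 isT); [| by apply: ord_inj]
  | |- context [@inord ?k ?v] => rewrite (_ : @inord k v = @Ordinal k.+1 v isT); [| by apply: ord_inj; rewrite /= inordK]
  end.
Lemma det2 (R : comNzRingType) (M : 'M[R]_2) :
  \det M = M (inord 0) (inord 0) * M (inord 1) (inord 1) - M (inord 0) (inord 1) * M (inord 1) (inord 0).
Proof.
rewrite (expand_det_row _ ord0) !big_ord_recl big_ord0 /cofactor !det_mx11 /=.
rewrite !mxE /=. normord. rewrite /= expr0 expr1. ring.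
Qed.
Lemma det3 (R : comNzRingType) (M : 'M[R]_3) :
  let m (a b : nat) := M (inord a) (inord b) in
  \det M = m 0%N 0%N * m 1%N 1%N * m 2%N 2%N
    + m 0%N 1%N * m 1%N 2%N * m 2%N 0%N
    + m 0%N 2%N * m 1%N 0%N * m 2%N 1%N
    - m 0%N 0%N * m 1%N 2%N * m 2%N 1%N
    - m 0%N 1%N * m 1%N 0%N * m 2%N 2%N
    - m 0%N 2%N * m 1%N 1%N * m 2%N 0%N.
Proof.
rewrite /= (expand_det_row _ ord0) !big_ord_recl big_ord0 /cofactor !det2 /=.
rewrite !mxE /=. normord. rewrite /= ?mxE. normord. rewrite /bump /=. ring.
Qed.
Definition E3 {R : comNzRingType} {n} (A : 'M[R]_n) i j l :=
  A i i * A j j * A l l + A i j * A j l * A l i + A i l * A l j * A j i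
  - A i i * A j l * A l j - A j j * A i l * A l i - A l l * A i j * A j i.

Lemma det_sub3 (R : comNzRingType) n (A : 'M[R]_n) i j l m (f : 'I_m -> 'I_n) :
  m = 3%N -> injective f -> (forall k, f k \in [set i; j; l]) ->
  \det (mxsub f f A) = E3 A i j l.
Proof.
move=> hm; subst m => finj hf.
rewrite det3 !mxE.
have nz a b : (a < 3)%N -> (b < 3)%N -> a != b -> f (inord a) != f (inord b).
  move=> ha hb ab; rewrite (inj_eq finj); apply: contra ab => /eqP/(congr1 val).
  by rewrite /= !inordK // => ->.
move: (hf (inord 0)) (hf (inord 1)) (hf (inord 2)) (nz 0%N 1%N isT isT isT) (nz 0%N 2%N isT isT isT) (nz 1%N 2%N isT isT isT).
rewrite /E3 !inE -!orbA.
by case/or3P=>/eqP->; case/or3P=>/eqP->; case/or3P=>/eqP->; rewrite ?eqxx //= => _ _ _; ring.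
Qed.

Lemma det_sub1 (R : comNzRingType) n (A : 'M[R]_n) i m (f : 'I_m -> 'I_n) :
  m = 1%N -> (forall k, f k \in [set i]) -> \det (mxsub f f A) = A i i.
Proof.
move=> hm; subst m => hf; rewrite det_mx11 mxE.
by have /set1P -> := hf 0.
Qed.

Lemma det_sub2 (R : comNzRingType) n (A : 'M[R]_n) i j m (f : 'I_m -> 'I_n) :
  m = 2%N -> injective f -> (forall k, f k \in [set i; j]) ->
  \det (mxsub f f A) = A i i * A j j - A i j * A j i.
Proof.
move=> hm; subst m => finj hf.
rewrite det2 !mxE.
have nz : f (inord 0) != f (inord 1).
  rewrite (inj_eq finj); apply/eqP => /(congr1 val).
  by rewrite /= !inordK.
move: (hf (inord 0)) (hf (inord 1)) nz; rewrite !inE.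
by case/orP=>/eqP->; case/orP=>/eqP->; rewrite ?eqxx //= => _; ring.
Qed.

Section PM.
Variable (L : fieldType) (n : nat) (A : 'M[L]_n).

Lemma pm1 i : principal_minor A [set i] = A i i.
Proof.
rewrite /principal_minor /principal_submx.
apply: det_sub1; first by rewrite cards1.
by move=> k; apply: enum_valP.
Qed.

Lemma pm2 i j : i != j -> principal_minor A [set i; j] = A i i * A j j - A i j * A j i.
Proof.
move=> ij; rewrite /principal_minor /principal_submx.
apply: det_sub2; first by rewrite cards2 ij.
  by move=> x y; apply: enum_val_inj.
by move=> k; apply: enum_valP.
Qed.

Lemma pm3 i j l : i != j -> i != l -> j != l ->
  principal_minor A [set i; j; l] = E3 A i j l.
Proof.
move=> ij il jl; rewrite /principal_minor /principal_submx.
apply: det_sub3.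
- by rewrite -setUA !cardsU1 cards1 !inE (negbTE ij) (negbTE il) (negbTE jl).
- by move=> x y; apply: enum_val_inj.
by move=> k; apply: enum_valP.
Qed.
End PM.

Lemma I2 n i j : (i < n -> j < n -> ((j + n) - i) %% n = 0 -> i = j)%N.
Proof.
move=> hi hj h; case: (leqP i j) => hij.
  have e : (j + n - i = (j - i) + n)%N by lia.
  by move: h; rewrite e modnDr modn_small; lia.
have : (j + n - i < n)%N by lia.
by move=> hs; move: h; rewrite modn_small //; lia.
Qed.

Lemma I3 n i k : (i < n -> k < n -> (((i + k) %% n + n) - i) %% n = k)%N.
Proof.
move=> hi hk; case: (ltnP (i+k) n) => h.
  by rewrite (modn_small h) -addnA addKn modnDr modn_small.
have -> : ((i+k) %% n = i + k - n)%N.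
  rewrite -{1}(subnK h) modnDr modn_small //; lia.
have -> : (i + k - n + n - i = k)%N by lia.
by rewrite modn_small.
Qed.

Lemma rank1_fact (F : fieldType) n (C : 'M[F]_n) : \rank C = 1%N ->
  exists u v : 'I_n -> F, forall i j, C i j = u i * v j.
Proof.
move=> hr; rewrite -(mulmx_base C).
move: (col_base C) (row_base C); rewrite hr => X Y.
exists (fun i => X i 0), (fun j => Y 0 j) => i j.
by rewrite mxE big_ord1.
Qed.

Unset Implicit Arguments. Set Strict Implicit.
Theorem mainTheorem10 (L : finFieldType) (q n : nat)
  (hq : (1 < q)%N) (hn : (0 < n)%N) (hL : #|L| = (q ^ n)%N)
  (A B : 'M[L]_n) :
  is_dickson q A -> is_dickson q B ->
  (exists d : L, \rank (A + diag_mx (\row_(i < n) d ^+ (q ^ i)))%R = 1%N) ->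
  equal_principal_minors A B ->
  diag_similar A B.
Proof.
move=> [a hA] _ [d hr] hpm.
set C := (A + _) in hr.
have frob := frobD hn hL.
have qpos : forall i, (0 < q ^ i)%N by move=> i; rewrite expn_gt0 (ltnW hq).
pose c (k : nat) := if k == 0%N then a 0%N + d else a k.
have hC : forall i j : 'I_n, C i j = c (((j + n) - i) %% n)%N ^+ (q ^ i).
  move=> i j; rewrite /C hA !mxE /c.
  case: (eqVneq i j) => [<-|ij].
    by rewrite addKn modnn eqxx /= frob mulr1n.
  rewrite mulr0n addr0; case: eqP => // e.
  by move: ij; have := I2 (ltn_ord i) (ltn_ord j) e => /val_inj ->; rewrite eqxx.
have [u [v huv]] := rank1_fact hr.
have C0 : C != 0 by apply/eqP => h0; move: hr; rewrite h0 mxrank0.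
have allzero : (forall k, (k < n)%N -> c k = 0) -> False.
  move=> hk; apply: (negP C0); apply/eqP/matrixP => i j.
  by rewrite [RHS]mxE hC hk ?ltn_pmod // expr0n eqn0Ngt qpos.
have fz : forall (x : L) (i : nat), 0 = x ^+ (q ^ i) -> x = 0.
  by move=> x i /esym/eqP; rewrite expf_eq0 => /andP[_ /eqP].
have unz : forall i, u i != 0.
  move=> i; apply/eqP => ui; apply: allzero => k hk.
  have := hC i (Ordinal (ltn_pmod (i + k) hn)).
  by rewrite /= I3 // huv ui mul0r => /fz.
have vnz : forall j, v j != 0.
  move=> j; apply/eqP => vj.
  have c0 : c 0%N = 0.
    by have := hC j j; rewrite addKn modnn huv vj mulr0 => /fz.
  apply: (negP C0); apply/eqP/matrixP => i l; rewrite [RHS]mxE huv.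
  have : u l * v l = 0 by rewrite -huv hC addKn modnn c0 expr0n eqn0Ngt qpos.
  by move/eqP; rewrite mulf_eq0 (negbTE (unz l)) => /eqP ->; rewrite mulr0.
have hAC : forall i j, i != j -> A i j = u i * v j.
  by move=> i j ij; rewrite -huv /C !mxE (negbTE ij) mulr0n addr0.
have Anz : forall i j, i != j -> A i j != 0.
  by move=> i j ij; rewrite hAC // mulf_neq0.
have hd : forall i, B i i = A i i.
  move=> i; have ne : [set i] != set0 by apply/set0Pn; exists i; rewrite !inE.
  by have := hpm _ ne; rewrite !pm1 => ->.
have h2 : forall i j, i != j -> B i j * B j i = A i j * A j i.
  move=> i j ij; have ne : [set i; j] != set0.
    by apply/set0Pn; exists i; rewrite !inE eqxx.
  by have := hpm _ ne; rewrite !pm2 // !hd => /addrI/oppr_inj ->.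
have Bnz : forall i j, i != j -> B i j != 0.
  move=> i j ij; apply/eqP => b0.
  have ji : j != i by rewrite eq_sym.
  have := mulf_neq0 (Anz i j ij) (Anz j i ji).
  by rewrite -h2 // b0 mul0r eqxx.
have h3 : forall i j l, i != j -> i != l -> j != l ->
    B i j * B j l * B l i = A i j * A j l * A l i.
  move=> i j l ij il jl.
  have ji : j != i by rewrite eq_sym.
  have li : l != i by rewrite eq_sym.
  have lj : l != j by rewrite eq_sym.
  have ne : [set i; j; l] != set0.
    by apply/set0Pn; exists i; rewrite !inE eqxx.
  have e3 := hpm _ ne; rewrite !pm3 // /E3 !hd -!mulrA in e3.
  rewrite (h2 j l) // (h2 i l) // (h2 i j) // in e3.
  have XY : A i l * (A l j * A j i) = A i j * (A j l * A l i).
    by rewrite !hAC //; ring.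
  rewrite XY in e3.
  set X := A i j * (A j l * A l i) in e3 XY.
  have s : B i j * B j l * B l i + B i l * B l j * B j i = X + X.
    apply/eqP; rewrite -subr_eq0; apply/eqP.
    match type of e3 with ?lh = ?rh =>
      have H : B i j * B j l * B l i + B i l * B l j * B j i - (X + X) = rh - lh by rewrite /X; ring end.
    by rewrite H e3 subrr.
  have p : (B i j * B j l * B l i) * (B i l * B l j * B j i) = X * X.
    transitivity ((B i j * B j i) * (B j l * B l j) * (B i l * B l i)); first by ring.
    rewrite (h2 i j) // (h2 j l) // (h2 i l) //.
    by rewrite /X !hAC //; ring.
  set x := B i j * B j l * B l i in s p *.
  set y := B i l * B l j * B j i in s p.
  have : (x - X) ^+ 2 = 0.
    transitivity (x ^+ 2 - (X + X) * x + X * X); first by ring.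
    by rewrite -s -p; ring.
  move/eqP; rewrite expf_eq0 /= subr_eq0 => /eqP ->.
  by rewrite /X; ring.
pose z : 'I_n := Ordinal hn.
pose t : 'rV[L]_n := \row_j (if j == z then 1 else B z j / A z j).
have tnz : forall j, t 0 j != 0.
  move=> j; rewrite mxE; case: (eqVneq j z) => [_|jz]; first exact: oner_neq0.
  have zj : z != j by rewrite eq_sym.
  by rewrite mulf_neq0 ?invr_neq0 ?Bnz ?Anz.
exists t; split => //.
have U : diag_mx t \in unitmx.
  by rewrite unitmxE unitfE det_diag; apply/prodf_neq0 => j _; apply: tnz.
suff E : diag_mx t *m B = A *m diag_mx t.
  by rewrite -mulmxA -E mulKmx.
apply/matrixP => i j; rewrite mul_diag_mx mul_mx_diag !mxE.
case: (eqVneq i z) => [->|iz]; case: (eqVneq j z) => [->|jz].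
- by rewrite ?eqxx hd mulr1 mul1r.
- have zj : z != j by rewrite eq_sym.
  by rewrite ?eqxx ?(negbTE jz) mul1r mulrCA mulfV ?Anz // mulr1.
- rewrite ?eqxx ?(negbTE iz) mulr1 mulrAC h2 1?eq_sym //.
  by rewrite mulrAC mulfV ?Anz 1?eq_sym // mul1r.
rewrite ?(negbTE iz) ?(negbTE jz).
have zi : z != i by rewrite eq_sym.
have zj : z != j by rewrite eq_sym.
case: (eqVneq i j) => [<-|ij]; first by rewrite hd mulrC.
have e1 : B i j = A z i * A i j * A j z / (B z i * B j z).
  rewrite -h3 //; field.
  by rewrite ?Bnz.
have e2 : B j z = A z j * A j z / B z j.
  rewrite -h2 //; field.
  by rewrite ?Bnz.
rewrite e1 e2; field.
by rewrite ?Bnz ?Anz.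
Qed.
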